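(* Let $K$ be an algebraic number field and $J\subseteq\mathcal O_K$ a nonzero ideal. Then the action of $\mathcal O_K^*$ on $\hat J$ has the ID property if and only if the action of $\mathcal O_K^*$ on $\widehat{\mathcal O_K}$ has the ID property.
   Context: $\mathcal O_K$ is the ring of integers of $K$, $\mathcal O_K^*$ its unit group. For a nonzero ideal $J$, $\hat J$ is the Pontryagin dual of the additive group $J$, with $\mathcal O_K^*$ acting by $(u\cdot\chi)(j)=\chi(uj)$. An action of a group $G$ on a compact space $X$ by homeomorphisms has the ID (infinite invariant dense) property if the only closed infinite $G$-invariant subset of $X$ is $X$ itself. *)

(* Defs.v *)
From HB Require Import structures.
From Stdlib Require Import Reals ZArith List.
From mathcomp Require Import all_boot all_order all_algebra all_field.
Set Implicit Arguments. Unset Strict Implicit. Unset Printing Implicit Defensive.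
Import GRing.Theory.

Section Defs.
Local Open Scope ring_scope.
Variable K : fieldExtType rat.

Definition in_OK (x : K) : Prop :=
  exists p : {poly int}, p \is monic /\ root (map_poly (fun z : int => z%:~R) p) x.

Definition unit_OK (u : K) : Prop :=
  in_OK u /\ u <> 0%R /\ in_OK (u^-1)%R.

Definition is_ideal_OK (J : K -> Prop) : Prop :=
  (forall x, J x -> in_OK x) /\ J 0%R /\
  (forall x y, J x -> J y -> J (x + y)%R) /\
  (forall x, J x -> J (- x)%R) /\
  (forall r x, in_OK r -> J x -> J (r * x)%R).

Definition nonzero_ideal (J : K -> Prop) : Prop := exists x, J x /\ x <> 0%R.

Definition is_intR (t : R) : Prop := exists z : Z, t = IZR z.
Definition near_intR (t eps : R) : Prop := exists z : Z, Rlt (Rabs (Rminus t (IZR z))) eps.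

(* A character of the additive group J, i.e. a homomorphism J -> R/Z,
   represented by a real-valued lift (values off J are irrelevant). *)
Definition is_char (J : K -> Prop) (chi : K -> R) : Prop :=
  forall a b, J a -> J b -> is_intR (Rminus (chi (a + b)%R) (Rplus (chi a) (chi b))).

(* two lifts represent the same element of the dual group \hat J *)
Definition char_eq (J : K -> Prop) (chi psi : K -> R) : Prop :=
  forall a, J a -> is_intR (Rminus (chi a) (psi a)).

Definition unit_act (u : K) (chi : K -> R) : K -> R := fun j => chi (u * j)%R.

(* Subsets of \hat J: predicates on lifts that consist of characters and are
   saturated under char_eq. *)
Definition dual_subset (J : K -> Prop) (S : (K -> R) -> Prop) : Prop :=
  (forall chi, S chi -> is_char J chi) /\
  (forall chi psi, S chi -> is_char J psi -> char_eq J chi psi -> S psi).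

(* closed in the compact (= pointwise convergence, J being discrete) topology *)
Definition dual_closed (J : K -> Prop) (S : (K -> R) -> Prop) : Prop :=
  forall chi, is_char J chi ->
    (forall (F : list K) (eps : R), Rlt 0 eps ->
       exists psi, S psi /\
         forall a, In a F -> J a -> near_intR (Rminus (psi a) (chi a)) eps) ->
    S chi.

Definition dual_infinite (J : K -> Prop) (S : (K -> R) -> Prop) : Prop :=
  forall l : list (K -> R),
    exists chi, S chi /\ forall psi, In psi l -> ~ char_eq J chi psi.

Definition unit_invariant (S : (K -> R) -> Prop) : Prop :=
  forall u chi, unit_OK u -> S chi -> S (unit_act u chi).

Definition ID_property (J : K -> Prop) : Prop :=
  forall S : (K -> R) -> Prop,
    dual_subset J S -> dual_closed J S -> dual_infinite J S -> unit_invariant S ->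
    forall chi, is_char J chi -> S chi.
End Defs.

(* Main.v *)
Require Import Defs.
From Stdlib Require Import Reals ZArith List Lia Lra ClassicalEpsilon Classical.
Ltac sring := ring.
Ltac sfield := field.
From mathcomp Require Import all_boot all_order all_algebra all_field.
From mathcomp Require Import ring.
From mathcomp Require Import zify ssrZ.
Set Implicit Arguments. Unset Strict Implicit. Unset Printing Implicit Defensive.
Import GRing.Theory.
Delimit Scope Z_scope with zz.

Lemma isZ_eq x y : is_intR x -> x = y -> is_intR y.
Proof. by move=> H <-. Qed.
Lemma isZ_add x y : is_intR x -> is_intR y -> is_intR (Rplus x y).
Proof. move=> [a ->] [b ->]; exists (a + b)%zz; by rewrite plus_IZR. Qed.
Lemma isZ_opp x : is_intR x -> is_intR (Ropp x).
Proof. move=> [a ->]; exists (- a)%zz; by rewrite opp_IZR. Qed.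
Lemma isZ_mul k x : is_intR x -> is_intR (Rmult (IZR k) x).
Proof. move=> [a ->]; exists (k * a)%zz; by rewrite mult_IZR. Qed.
Lemma isZ_IZR k : is_intR (IZR k).
Proof. by exists k. Qed.

Ltac genf f := repeat match goal with |- context [f ?t] => let z := fresh "z" in set z := f t end.

Section Ext.
Local Open Scope ring_scope.
Variable K : fieldExtType rat.

Definition Zc (k : Z) : K := (int_of_Z k)%:~R.
Lemma Zc_add a b : Zc (a + b) = Zc a + Zc b.
Proof. by rewrite /Zc (_ : int_of_Z (a + b) = int_of_Z a + int_of_Z b) ?intrD //; lia. Qed.
Lemma Zc_opp a : Zc (- a) = - Zc a.
Proof. by rewrite /Zc (_ : int_of_Z (- a) = - int_of_Z a) ?mulrNz //; lia. Qed.
Lemma Zc_mul a b : Zc (a * b) = Zc a * Zc b.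
Proof. by rewrite /Zc (_ : int_of_Z (a * b) = int_of_Z a * int_of_Z b) ?intrM //; lia. Qed.
Lemma Zc0 : Zc 0 = 0. Proof. by rewrite /Zc (_ : int_of_Z 0 = 0) //; lia. Qed.
Lemma Zc1 : Zc 1 = 1. Proof. by rewrite /Zc (_ : int_of_Z 1 = 1) //; lia. Qed.

Definition grp (C : K -> Prop) :=
  C 0 /\ (forall x y, C x -> C y -> C (x + y)) /\ (forall x, C x -> C (- x)).

Section CharFacts.
Variables (C : K -> Prop) (f : K -> R).
Hypothesis (gC : grp C) (cf : is_char C f).

Lemma char0 : is_intR (f 0).
Proof.
case: gC => C0 _. have := cf C0 C0. rewrite addr0 => H.
apply: (isZ_eq (isZ_opp H)); genf f; sring.
Qed.

Lemma charN x : C x -> is_intR (Rplus (f (- x)) (f x)).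
Proof.
case: gC => C0 [_ CN] Cx. have := cf (CN _ Cx) Cx. have E : - x + x = 0 by rewrite addNr.
rewrite E => H.
apply: (isZ_eq (isZ_add (isZ_opp H) char0)); genf f; sring.
Qed.

Lemma charZ x k : C x -> C (Zc k * x) /\ is_intR (Rminus (f (Zc k * x)) (Rmult (IZR k) (f x))).
Proof.
case: gC => C0 [CD CN] Cx.
have Hn : forall n : nat, C (Zc (Z.of_nat n) * x) /\
    is_intR (Rminus (f (Zc (Z.of_nat n) * x)) (Rmult (IZR (Z.of_nat n)) (f x))).
  elim=> [|n [IH1 IH2]].
    rewrite /= Zc0 mul0r; split => //; apply: (isZ_eq char0); genf f; simpl; sring.
  have -> : Z.of_nat n.+1 = (Z.of_nat n + 1)%zz by lia.
  rewrite Zc_add Zc1 mulrDl mul1r; split; first by apply: CD.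
  have := cf IH1 Cx => H.
  apply: (isZ_eq (isZ_add H IH2)); rewrite plus_IZR; genf f; sring.
have [n [->|->]] : exists n : nat, k = Z.of_nat n \/ k = (- Z.of_nat n)%zz.
  by exists (Z.to_nat (Z.abs k)); lia.
  exact: Hn.
case: (Hn n) => H1 H2; rewrite Zc_opp mulNr; split; first by apply: CN.
have := charN H1 => H3.
apply: (isZ_eq (isZ_add H3 (isZ_opp H2))); rewrite opp_IZR; genf f; sring.
Qed.
End CharFacts.

Section Step.
Variables (C : K -> Prop) (f : K -> R) (b : K).
Hypothesis (gC : grp C) (cf : is_char C f).

Definition minP (n : Z) := (0 < n)%zz /\ C (Zc n * b) /\
  forall m, (0 < m < n)%zz -> ~ C (Zc m * b).
Definition n0 := epsilon (inhabits 0%zz) minP.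
Definition tt := Rdiv (f (Zc n0 * b)) (IZR n0).

Lemma minP_ex n : (0 < n)%zz -> C (Zc n * b) -> exists m, minP m.
Proof.
move=> Hn HC; apply: NNPP => Hno.
have Hall : forall k : nat, forall m, (0 < m <= Z.of_nat k)%zz -> ~ C (Zc m * b).
  elim=> [|k IH] m Hm; first lia.
  move=> HCm; apply: Hno; exists m; split; first lia; split => // j Hj.
  apply: IH; lia.
by apply: (Hall (Z.to_nat n) n) => //; lia.
Qed.

Lemma L m : C (Zc m * b) -> is_intR (Rminus (f (Zc m * b)) (Rmult (IZR m) tt)).
Proof.
move=> Hm. case: (Z.eq_dec m 0) => [->|m0].
  rewrite Zc0 mul0r; apply: (isZ_eq (char0 gC cf)); genf f; sring.
have [n' Pn'] : exists n, minP n.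
  case: (Z_lt_le_dec 0 m) => Hs; first exact: (minP_ex Hs Hm).
  apply: (minP_ex (n := (- m)%zz)); first lia.
  by rewrite Zc_opp mulNr; case: gC => _ [_ CN]; apply: CN.
have := epsilon_spec (inhabits 0%zz) minP (ex_intro _ n' Pn').
rewrite -/n0 => -[Hpos [HC Hmin]].
have [HqC Hq] := charZ gC cf (m / n0)%zz HC.
have Hr : (m mod n0)%zz = 0%zz.
  apply: NNPP => Hr; apply: (Hmin (m mod n0)%zz).
    have := Z.mod_pos_bound m n0 Hpos; lia.
  have -> : Zc (m mod n0) * b = Zc m * b + - (Zc (m / n0) * (Zc n0 * b)).
    rewrite (Z.mod_eq m n0); last lia.
    by rewrite Zc_add Zc_opp Zc_mul; ring.
  by case: gC => _ [CD CN]; apply: CD => //; apply: CN.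
have Em : m = ((m / n0) * n0)%zz by rewrite {1}(Z.div_mod m n0) ?Hr; lia.
rewrite {1}Em Zc_mul -mulrA.
apply: (isZ_eq Hq). have -> : IZR m = Rmult (IZR (m / n0)%zz) (IZR n0) by rewrite {1}Em mult_IZR.
rewrite /tt. genf f; sfield.
apply: not_0_IZR; lia.
Qed.

Definition Cs (x : K) := exists c k, C c /\ x = c + Zc k * b.
Definition rep (x : K) : K * Z :=
  epsilon (inhabits (0, 0%zz)) (fun p => C p.1 /\ x = p.1 + Zc p.2 * b).
Definition fs (x : K) : R := Rplus (f (rep x).1) (Rmult (IZR (rep x).2) tt).

Lemma key c k : C c -> is_intR (Rminus (fs (c + Zc k * b)) (Rplus (f c) (Rmult (IZR k) tt))).
Proof.
move=> Hc.
have := epsilon_spec (inhabits (0, 0%zz)) (fun p => C p.1 /\ c + Zc k * b = p.1 + Zc p.2 * b)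
  (ex_intro _ (c, k) (conj Hc erefl)).
rewrite /fs -/(rep _). case: (rep _) => c' k' /= [Hc' E].
case: gC => _ [CD CN].
have Ed : Zc (k' - k) * b = c + - c'.
  rewrite Zc_add Zc_opp mulrDl mulNr; apply/eqP; rewrite -subr_eq0; apply/eqP.
  rewrite (_ : Zc k' * b - Zc k * b - (c + - c') = - ((c + Zc k * b) - (c' + Zc k' * b))); last by ring.
  by rewrite E subrr oppr0.
have HdC : C (Zc (k' - k) * b) by rewrite Ed; apply: CD => //; apply: CN.
have H1 := L HdC.
have Ec : c = c' + Zc (k' - k) * b by rewrite Ed; ring.
have H2 := cf Hc' HdC. rewrite -Ec in H2.
apply: (isZ_eq (isZ_opp (isZ_add H2 H1))). rewrite minus_IZR; genf f; sring.
Qed.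

Lemma grpCs : grp Cs.
Proof.
case: gC => C0 [CD CN]; split; [|split].
- by exists 0, 0%zz; rewrite Zc0 mul0r addr0.
- move=> x y [c1 [k1 [H1 ->]]] [c2 [k2 [H2 ->]]].
  exists (c1 + c2), (k1 + k2)%zz; split; first exact: CD.
  by rewrite Zc_add; ring.
- move=> x [c1 [k1 [H1 ->]]]; exists (- c1), (- k1)%zz; split; first exact: CN.
  by rewrite Zc_opp; ring.
Qed.

Lemma CsC x : C x -> Cs x.
Proof. by move=> Hx; exists x, 0%zz; rewrite Zc0 mul0r addr0. Qed.

Lemma Csb : Cs b.
Proof. by case: gC => C0 _; exists 0, 1%zz; rewrite Zc1 mul1r add0r. Qed.

Lemma charCs : is_char Cs fs.
Proof.
move=> x y [c1 [k1 [H1 ->]]] [c2 [k2 [H2 ->]]].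
case: gC => C0 [CD CN].
have -> : c1 + Zc k1 * b + (c2 + Zc k2 * b) = (c1 + c2) + Zc (k1 + k2) * b.
  by rewrite Zc_add; ring.
have K3 := key (k1 + k2)%zz (CD _ _ H1 H2).
have K1 := key k1 H1. have K2 := key k2 H2. have F := cf H1 H2.
apply: (isZ_eq (isZ_add (isZ_add K3 (isZ_opp (isZ_add K1 K2))) F)).
rewrite plus_IZR; genf f; sring.
Qed.

Lemma eqCs : char_eq C f fs.
Proof.
move=> c Hc. have := key 0%zz Hc. rewrite Zc0 mul0r addr0 => H.
apply: (isZ_eq (isZ_opp H)); genf f; sring.
Qed.
End Step.

End Ext.

Section Chain.
Local Open Scope ring_scope.
Variable K : fieldExtType rat.
Import VectorInternalTheory.
Definition enumK (n : nat) : K := match unpickle n with Some r => r2v r | None => 0 end.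
Definition idx (x : K) : nat := pickle (v2r x).
Lemma enumKP (x : K) : enumK (idx x) = x.
Proof. by rewrite /enumK /idx pickleK v2rK. Qed.

Variables (C0 : K -> Prop) (f0 : K -> R).
Hypotheses (gC0 : grp C0) (cf0 : is_char C0 f0).

Fixpoint stage (n : nat) : (K -> Prop) * (K -> R) :=
  match n with
  | 0 => (C0, f0)
  | S n => let p := stage n in (Cs p.1 (enumK n), fs p.1 p.2 (enumK n))
  end.

Lemma stage_inv n : grp (stage n).1 /\ is_char (stage n).1 (stage n).2.
Proof.
elim: n => [|n [IH1 IH2]] //=; split; first exact: grpCs.
exact: charCs.
Qed.

Lemma stage_mono n m : (n <= m)%N ->
  (forall x, (stage n).1 x -> (stage m).1 x) /\ char_eq (stage n).1 (stage n).2 (stage m).2.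
Proof.
elim: m => [|m IH].
  rewrite leqn0 => /eqP ->; split => // a _; apply: (isZ_eq (isZ_IZR 0)); sring.
rewrite leq_eqVlt => /orP [/eqP ->|]; first by split => // a _; apply: (isZ_eq (isZ_IZR 0)); sring.
rewrite ltnS => /IH [H1 H2]; have [g1 c1] := stage_inv m; split => /=.
  by move=> x /H1; apply: CsC.
move=> a Ha. have := eqCs (enumK m) g1 c1 (H1 _ Ha) => H3.
have := H2 a Ha => H4.
apply: (isZ_eq (isZ_add H4 H3)); sring.
Qed.

Lemma stage_en n : (stage n.+1).1 (enumK n).
Proof. have [g1 _] := stage_inv n; exact: Csb. Qed.

Definition gext (x : K) : R := (stage (idx x).+1).2 x.

Lemma g_stage x m : ((idx x).+1 <= m)%N ->
  (stage m).1 x /\ is_intR (Rminus (gext x) ((stage m).2 x)).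
Proof.
move=> Hm; have [H1 H2] := stage_mono Hm.
have Hx : (stage (idx x).+1).1 x by have := stage_en (idx x); rewrite enumKP.
by split; [apply: H1 | apply: H2].
Qed.

Lemma gext_char : is_char (fun _ => True) gext.
Proof.
move=> a b _ _.
set m := (maxn (idx a).+1 (maxn (idx b).+1 (idx (a + b)).+1)).
have [Ha Ea] := g_stage (m := m) (leq_maxl _ _).
have [Hb Eb] := g_stage (x := b) (m := m) (leq_trans (leq_maxl _ _) (leq_maxr _ _)).
have [Hab Eab] := g_stage (x := a + b) (m := m) (leq_trans (leq_maxr _ _) (leq_maxr _ _)).
have [_ cm] := stage_inv m.
have := cm a b Ha Hb => H.
apply: (isZ_eq (isZ_add (isZ_add H Eab) (isZ_opp (isZ_add Ea Eb)))); sring.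
Qed.

Lemma gext_eq : char_eq C0 f0 gext.
Proof.
move=> c Hc. have [_ E] := g_stage (x := c) (m := (idx c).+1) (leqnn _).
have [_ H] := stage_mono (n := 0) (m := (idx c).+1) (leq0n _).
have := H c Hc => H2. change (is_intR (Rminus (f0 c) ((stage (idx c).+1).2 c))) in H2.
apply: (isZ_eq (isZ_add H2 (isZ_opp E))); sring.
Qed.
End Chain.

Lemma extension (K : fieldExtType rat) (C : K -> Prop) (f : K -> R) :
  grp C -> is_char C f -> exists g, is_char (fun _ => True) g /\ char_eq C f g.
Proof. move=> gC cf; exists (gext C f); split; [exact: gext_char | exact: gext_eq]. Qed.

From Stdlib Require Import FunctionalExtensionality.

Section Transfer.
Local Open Scope ring_scope.
Variable K : fieldExtType rat.
Variables (A B : K -> Prop) (y : K).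
Hypotheses (gA : grp A) (gB : grp B) (y0 : y != 0)
  (yAB : forall a, A a -> B (y * a))
  (uA : forall u a, unit_OK u -> A a -> A (u * a))
  (uB : forall u a, unit_OK u -> B a -> B (u * a)).

Definition comp (psi : K -> R) : K -> R := fun a => psi (y * a).

Lemma lift chi : is_char A chi ->
  exists psi, is_char (fun _ => True) psi /\ char_eq A chi (comp psi).
Proof.
move=> cchi.
pose C := fun x : K => A (y^-1 * x).
pose phi := fun x : K => chi (y^-1 * x).
have gC : grp C.
  case: gA => A0 [AD AN]; split; [|split].
  - by rewrite /C mulr0.
  - by move=> a b Ha Hb; rewrite /C mulrDr; apply: AD.
  - by move=> a Ha; rewrite /C mulrN; apply: AN.
have cphi : is_char C phi.
  by move=> a b Ha Hb; rewrite /phi mulrDr; apply: cchi.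
have [psi [cpsi Epsi]] := extension gC cphi.
exists psi; split => // a Ha.
have HC : C (y * a) by rewrite /C mulKf.
have := Epsi _ HC. by rewrite /phi mulKf.
Qed.

Lemma charcomp psi : is_char B psi -> is_char A (comp psi).
Proof. move=> cp a b Ha Hb; rewrite /comp mulrDr; apply: cp; exact: yAB. Qed.

Lemma eqcomp psi psi' : char_eq B psi psi' -> char_eq A (comp psi) (comp psi').
Proof. by move=> E a Ha; apply: E; apply: yAB. Qed.

Lemma transfer : ID_property B -> ID_property A.
Proof.
move=> IDB S [Ssub Ssat] Scl Sinf Sinv.
pose Sp := fun psi => is_char B psi /\ S (comp psi).
have HSp : forall psi, is_char B psi -> Sp psi.
  apply: IDB.
  - split; first by move=> psi [].
    move=> psi psi' [_ Sps] cps' E; split => //.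
    exact: (Ssat _ _ Sps (charcomp cps') (eqcomp E)).
  - move=> psi cpsi Happ; split => //.
    apply: (Scl _ (charcomp cpsi)) => F eps Heps.
    have [psi' [[_ Sps'] Hn]] := Happ (map (fun a => y * a) F) eps Heps.
    exists (comp psi'); split => // a Ha HAa.
    apply: Hn; last exact: yAB.
    exact: (in_map (fun a => y * a)).
  - move=> l.
    have [chi [Schi Hne]] := Sinf (map comp l).
    have [psi [cpsi Epsi]] := lift (Ssub _ Schi).
    exists psi; split.
      split; first by move=> a b _ _; apply: cpsi.
      exact: (Ssat _ _ Schi (charcomp (fun a b _ _ => cpsi a b I I)) Epsi).
    move=> psi'' Hin E.
    apply: (Hne (comp psi'')); first exact: in_map.
    move=> a Ha. have := Epsi a Ha => H1. have := E (y * a) (yAB Ha) => H2.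
    apply: (isZ_eq (isZ_add H1 H2)); rewrite /comp; sring.
  - move=> u psi Hu [cpsi Spsi]; split.
      move=> a b Ha Hb; rewrite /unit_act mulrDr; apply: cpsi; exact: uB.
    have := Sinv u (comp psi) Hu Spsi.
    have -> : unit_act u (comp psi) = comp (unit_act u psi).
      by apply: functional_extensionality => a; rewrite /unit_act /comp mulrCA.
    done.
move=> chi cchi.
have [psi [cpsi Epsi]] := lift cchi.
have [_ Sc] := HSp psi (fun a b _ _ => cpsi a b I I).
apply: (Ssat _ _ Sc cchi) => a Ha.
have := Epsi a Ha => H; apply: (isZ_eq (isZ_opp H)); sring.
Qed.
End Transfer.

Lemma inOKE (K : fieldExtType rat) (x : K) :
  in_OK x <-> integralOver (intr : {rmorphism int -> K}) x.
Proof. split.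
  by case=> p [H1 H2]; exists p.
by case=> p H1 H2; exists p; split.
Qed.

Local Open Scope ring_scope.
Theorem proposition4p2 (K : fieldExtType rat) (J : K -> Prop) :
  is_ideal_OK J -> nonzero_ideal J ->
  (ID_property J <-> ID_property (@in_OK K)).
Proof.
move=> [Jin [J0 [JD [JN JM]]]] [x [Jx x0]].
have gJ : grp J by [].
have gO : grp (@in_OK K).
  split; [|split].
  - by apply/inOKE; apply: integral0.
  - by move=> a b /inOKE Ha /inOKE Hb; apply/inOKE; apply: integral_add.
  - by move=> a /inOKE Ha; apply/inOKE; apply: integral_opp.
have uO : forall u a : K, unit_OK u -> in_OK a -> in_OK (u * a).
  by move=> u a; rewrite /unit_OK => -[Hu _] Ha; apply/inOKE; apply: integral_mul; apply/inOKE.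
have uJ : forall u a : K, unit_OK u -> J a -> J (u * a).
  by move=> u a; rewrite /unit_OK => -[Hu _] Ha; apply: JM.
split.
- apply: (transfer (y := x)) => //.
  + by apply/eqP.
  + by move=> a Ha; rewrite mulrC; apply: JM.
- apply: (transfer (y := 1)) => //.
  + exact: oner_neq0.
  + by move=> a Ha; rewrite mul1r; apply: Jin.
Qed.
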